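(* Let $A$ be a T-brace and suppose that $a\in\zeta_n(\star,A)$ for some natural number $n$. Let $a_1=a$ and $a_{i+1}=a_i\star a_i$ for all $i\geq 1$. Then (i) $\mathbf{br}(a)$ is an ideal of $A$ and $\mathbf{br}(a)=\langle a_1\rangle+\langle a_2\rangle+\dots+\langle a_n\rangle$; (ii) if the additive group of $\zeta(\star,A)$ is torsion-free, then $\mathbf{br}(a)=\langle a_1\rangle\oplus\langle a_2\rangle\oplus\dots\oplus\langle a_n\rangle$. Here $\langle x\rangle$ denotes the cyclic subgroup of $(A,+)$ generated by $x$.
   Context: A (left) brace is a set $A$ with two operations $+$ and $\cdot$ such that $(A,+)$ is an abelian group, $(A,\cdot)$ is a group, and $a(b+c)=ab+ac-a$ for all $a,b,c\in A$. Put $a\star b=ab-a-b$. A subbrace is a subset which is a subgroup of both $(A,+)$ and $(A,\cdot)$; $\mathbf{br}(a)$ is the intersection of all subbraces containing $a$. A subbrace $L$ is an ideal if $a\star z, z\star a\in L$ for all $a\in A$, $z\in L$, and then the quotient brace $A/L$ is defined. $A$ is a T-brace if whenever $I$ is an ideal of $J$ and $J$ is an ideal of $A$, then $I$ is an ideal of $A$. The $\star$-center is $\zeta(\star,A)=\{a: a\star x=x\star a=0\ \forall x\}$; the upper $\star$-central series is $\zeta_0(\star,A)=0$, $\zeta_{n+1}(\star,A)/\zeta_n(\star,A)=\zeta(\star,A/\zeta_n(\star,A))$. *)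

(* Defs.v *)
From HB Require Import structures.
From mathcomp Require Import all_boot all_order all_algebra.
Set Implicit Arguments. Unset Strict Implicit. Unset Printing Implicit Defensive.
Import GRing.Theory.
Local Open Scope ring_scope.

Record brace (V : zmodType) := Brace {
  bmul : V -> V -> V;
  binv : V -> V;
  bone : V;
  bmulA : forall a b c, bmul a (bmul b c) = bmul (bmul a b) c;
  bmul1l : forall a, bmul bone a = a;
  bmul1r : forall a, bmul a bone = a;
  bmulVl : forall a, bmul (binv a) a = bone;
  bmulVr : forall a, bmul a (binv a) = bone;
  bdistr : forall a b c, bmul a (b + c) = bmul a b + bmul a c - a
}.

Section BraceDefs.
Variables (V : zmodType) (B : brace V).

Definition star (a b : V) : V := bmul B a b - a - b.

Definition subbrace (S : V -> Prop) : Prop :=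
  (S 0 /\ (forall x y, S x -> S y -> S (x + y)) /\ (forall x, S x -> S (- x))) /\
  (S (bone B) /\ (forall x y, S x -> S y -> S (bmul B x y))
    /\ (forall x, S x -> S (binv B x))).

Definition br (a : V) : V -> Prop :=
  fun x => forall S, subbrace S -> S a -> S x.

Definition ideal_of (J I : V -> Prop) : Prop :=
  [/\ (forall x, I x -> J x), subbrace I
    & forall a z, J a -> I z -> I (star a z) /\ I (star z a)].

Definition ideal (L : V -> Prop) : Prop := ideal_of (fun _ => True) L.

Definition T_brace : Prop :=
  forall I J : V -> Prop, ideal J -> ideal_of J I -> ideal I.

Definition star_center (a : V) : Prop :=
  forall x, star a x = 0 /\ star x a = 0.

(* upper star-central series: zeta_0 = 0, and a + zeta_n lies in the
   star-center of A / zeta_n iff a*x and x*a lie in zeta_n for all x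
   (star in the quotient is computed on representatives). *)
Fixpoint zeta_star (n : nat) : V -> Prop :=
  match n with
  | 0 => fun a => a = 0
  | k.+1 => fun a => forall x, zeta_star k (star a x) /\ zeta_star k (star x a)
  end.

(* a_1 = a, a_{i+1} = a_i * a_i ; here 0-indexed: aseq a i = a_{i+1} *)
Fixpoint aseq (a : V) (i : nat) : V :=
  match i with
  | 0 => a
  | k.+1 => star (aseq a k) (aseq a k)
  end.

Definition cyc_sum (a : V) (n : nat) : V -> Prop :=
  fun x => exists k : 'I_n -> int, x = \sum_(i : 'I_n) (aseq a i *~ k i).

Definition cyc_sum_direct (a : V) (n : nat) : Prop :=
  forall k : 'I_n -> int, \sum_(i : 'I_n) (aseq a i *~ k i) = 0 ->
    forall i : 'I_n, aseq a i *~ k i = 0.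

End BraceDefs.

(* Main.v *)
Require Import Defs.
From mathcomp Require Import all_boot all_order all_algebra.
Local Open Scope ring_scope.
Import GRing.Theory.
Set Implicit Arguments.

Section Basic.
Variables (V : zmodType) (B : brace V).
Local Notation m := (bmul B).
Local Notation s := (star B).
Local Notation iv := (binv B).

Lemma bmulr0 a : m a 0 = a.
Proof.
have := bdistr B a 0 0; rewrite addr0 -addrA -{1}(addr0 (m a 0)) => /addrI.
by move/eqP; rewrite eq_sym subr_eq0 => /eqP.
Qed.

Lemma bone0 : bone B = 0.
Proof. by have := bmul1l B 0; rewrite bmulr0. Qed.

Lemma bmul0l a : m 0 a = a.
Proof. by rewrite -bone0 bmul1l. Qed.

Lemma zsolve (x y z w : V) : x = y + z - w -> z = x + w - y.
Proof. by move=> ->; rewrite subrK [y + z]addrC addrK. Qed.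

Lemma bmulN a b : m a (- b) = a + a - m a b.
Proof.
by have := bdistr B a b (- b); rewrite subrr bmulr0 => /zsolve.
Qed.

Lemma bmulE a b : m a b = a + b + s a b.
Proof. rewrite /star; set X := m a b; by rewrite -(addrA X) -opprD addrC addNKr. Qed.

Lemma star0r a : s a 0 = 0.
Proof. by rewrite /star bmulr0 subrr subr0. Qed.

Lemma star0l a : s 0 a = 0.
Proof. by rewrite /star bmul0l subr0 subrr. Qed.

Lemma starD a b c : s a (b + c) = s a b + s a c.
Proof.
rewrite /star bdistr.
rewrite !opprD !addrA; congr (_ + _).
rewrite -!addrA; congr (_ + _); rewrite !addrA.
rewrite addrC !addrA; congr (_ + _).
by rewrite addrC addrA addrAC.
Qed.

Lemma starN a b : s a (- b) = - s a b.
Proof.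
apply/eqP; rewrite -subr_eq0 opprK -starD addNr.
by rewrite star0r.
Qed.

Lemma starMn a b k : s a (b *+ k) = s a b *+ k.
Proof. by elim: k => [|k IH]; rewrite ?mulr0n ?star0r // !mulrS starD IH. Qed.

Lemma starMz a b (k : int) : s a (b *~ k) = s a b *~ k.
Proof.
case: k => k; first by rewrite /intmul starMn.
by rewrite /intmul starN starMn.
Qed.

Definition lam a x := s a x + x.

Lemma lamE a x : lam a x = m a x - a.
Proof. by rewrite /lam /star subrK. Qed.

Lemma lamD a x y : lam a (x + y) = lam a x + lam a y.
Proof. by rewrite /lam starD addrACA. Qed.

Lemma lamM a b c : lam (m a b) c = lam a (lam b c).
Proof.
rewrite !lamE bdistr bmulA bmulN.
rewrite -!addrA; congr (_ + _).
rewrite !addrA.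
by rewrite [a + a - _]addrAC addrK addrAC subrr add0r.
Qed.

Lemma starF2 a b c : s (m a b) c = s a (s b c) + s a c + s b c.
Proof.
have E : forall u x, s u x = lam u x - x by move=> u x; rewrite /lam addrK.
rewrite (E _ c) lamM (E b c) starD starN subrK addrA.
by rewrite /lam.
Qed.

Lemma starV a c : s (iv a) c = - (s (iv a) (s a c) + s a c).
Proof.
have H := starF2 (iv a) a c; rewrite bmulVl bone0 star0l addrAC in H.
by apply/eqP; rewrite -addr_eq0 addrC -H.
Qed.

Lemma shiftE u z : m u (lam (iv u) z) = u + z.
Proof.
have -> : m u (lam (iv u) z) = u + lam u (lam (iv u) z) by rewrite (lamE u) addrC subrK.
by rewrite -lamM bmulVr bone0 /lam star0l add0r.
Qed.

Lemma addE u v : u + v = m u v - s u v.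
Proof. by rewrite bmulE addrK. Qed.

Lemma binvE x : iv x = - (x + s (iv x) x).
Proof. by rewrite /star bmulVl bone0 add0r addrC subrK opprK. Qed.

Lemma oppE u : - u = m (iv u) (- s u u).
Proof.
by rewrite -starN -[s u (- u)]add0r -(subrr u) -bmulE bmulA bmulVl bmul1l.
Qed.

End Basic.

Section Sets.
Variables (V : zmodType) (B : brace V).
Local Notation m := (bmul B).
Local Notation s := (star B).
Local Notation iv := (binv B).

Definition grp (M : V -> Prop) :=
  M 0 /\ (forall x y, M x -> M y -> M (x + y)) /\ (forall x, M x -> M (- x)).
Definition idl (M : V -> Prop) :=
  grp M /\ (forall x t, M t -> M (s x t) /\ M (s t x)).
Definition sumset (P Q : V -> Prop) : V -> Prop :=
  fun x => exists p q, P p /\ Q q /\ x = p + q.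

Lemma grpMn M x k : grp M -> M x -> M (x *+ k).
Proof.
move=> [H0 [HD HN]] Hx; elim: k => [|k IH]; first by rewrite mulr0n.
by rewrite mulrS; apply: HD.
Qed.

Lemma grpMz M x (k : int) : grp M -> M x -> M (x *~ k).
Proof.
move=> G Hx; case: k => k; first by apply: grpMn.
by rewrite /intmul; apply G.2.2; apply: grpMn.
Qed.

Lemma grpB M x y : grp M -> M x -> M y -> M (x - y).
Proof. by move=> G Hx Hy; apply G.2.1 => //; apply G.2.2. Qed.

Lemma grp_sum P Q : grp P -> grp Q -> grp (sumset P Q).
Proof.
move=> GP GQ; split; first by exists 0, 0; rewrite addr0; split; [apply GP.1|split; [apply GQ.1|]].
split.
  move=> x y [p [q [Hp [Hq ->]]]] [p' [q' [Hp' [Hq' ->]]]].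
  exists (p + p'), (q + q'); split; first by apply GP.2.1.
  by split; [apply GQ.2.1|rewrite addrACA].
move=> x [p [q [Hp [Hq ->]]]]; exists (- p), (- q); split; first by apply GP.2.2.
by split; [apply GQ.2.2|rewrite opprD].
Qed.

Lemma idl_ext P Q : (forall x, P x <-> Q x) -> idl P -> idl Q.
Proof.
move=> E [[H0 [HD HN]] HS]; split; first split.
- by apply/E.
- split; first by move=> x y /E Hx /E Hy; apply/E; apply HD.
  by move=> x /E Hx; apply/E; apply HN.
- by move=> x t /E Ht; have [H1 H2] := HS x t Ht; split; apply/E.
Qed.

Lemma mk_ideal_of (J I : V -> Prop) :
  (forall x, I x -> J x) -> subbrace B J -> grp I ->
  (forall j t, J j -> I t -> I (s j t) /\ I (s t j)) -> ideal_of B J I.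
Proof.
move=> IJ SJ GI HS; split => //; split => //; move: GI => [I0 [ID IN]].
split; first by rewrite bone0.
split.
  move=> x y Ix Iy; rewrite bmulE; apply ID; first by apply ID.
  by apply: (HS x y (IJ x Ix) Iy).1.
move=> x Ix; rewrite binvE; apply IN; apply ID => //.
have Jv : J (iv x) by move: SJ => [_ [_ [_ SJ]]]; apply SJ; apply IJ.
by apply: (HS _ _ Jv Ix).1.
Qed.

Lemma idl_ideal M : idl M -> ideal B M.
Proof.
move=> [G HS]; apply: mk_ideal_of => //.
by move=> j t _ Ht; apply HS.
Qed.

Lemma ideal_idl M : ideal B M -> idl M.
Proof.
move=> [_ [G _] HS]; split => //.
by move=> x t Ht; apply HS.
Qed.

Lemma Lmod2 (M' M : V -> Prop) u z y :
  (forall x z, M' z -> M' (s x z)) -> (forall x y, M' x -> M' y -> M' (x + y)) ->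
  (forall z y, M' z -> M (s z y)) -> (forall x t, M t -> M (s x t)) ->
  (forall x y, M x -> M y -> M (x + y)) -> M' z -> M (s (u + z) y - s u y).
Proof.
move=> H1 H2 H3 H4 H5 Hz.
rewrite -(@shiftE _ B u z) starF2 addrAC addrK.
have Hz' : M' (@lam _ B (iv u) z) by apply H2 => //; apply H1.
by apply H5; [apply H4; apply H3|apply H3].
Qed.

Lemma Lmod M u z y : idl M -> M z -> M (s (u + z) y - s u y).
Proof.
move=> [[_ [GD _]] HS] Hz.
exact: (Lmod2 M M u z y (fun x t Ht => (HS x t Ht).1) GD
   (fun t x Ht => (HS x t Ht).2) (fun x t Ht => (HS x t Ht).1) GD Hz).
Qed.

Lemma Lpos M u v y : idl M -> M (s u y) -> M (s v y) -> M (s u v) -> M (s (u + v) y).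
Proof.
move=> I Hu Hv Huv; rewrite (@addE _ B u v).
have I' := I; move: I' => [[I0 [ID IN]] IS].
have H1 : M (s (m u v - s u v) y - s (m u v) y) by apply: Lmod => //; apply IN.
rewrite -(subrK (s (m u v) y) (s (m u v - s u v) y)).
apply ID => //.
rewrite starF2; apply ID; [apply ID; [exact: (IS _ _ Hv).1 | exact Hu] | exact Hv].
Qed.

Lemma Lneg M u y : idl M -> M (s u y) -> M (s u u) -> M (s (- u) y).
Proof.
move=> [[I0 [ID IN]] IS] Hu Huu; rewrite (@oppE _ B u) starF2.
have Hp : M (- s u u) by apply IN.
apply ID; last by exact: (IS _ _ Hp).2.
apply ID; first by exact: (IS _ _ (IS _ _ Hp).2).1.
rewrite starV; apply IN; apply ID => //.
exact: (IS _ _ Hu).1.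
Qed.

Lemma LkB M b (k : int) : idl M -> M (s b b) -> M (s (b *~ k) b).
Proof.
move=> I Hbb; have I' := I; move: I' => [G IS].
have Hn : forall n : nat, M (s (b *+ n) b).
  elim=> [|n IH]; first by rewrite mulr0n star0l; apply G.
  by rewrite mulrSr; apply Lpos.
case: k => k; first by apply Hn.
rewrite /intmul; apply Lneg => //.
by rewrite starMn; apply grpMn.
Qed.

End Sets.
Arguments grp {V} M.
Arguments sumset {V} P Q _.


Section Main.
Variables (V : zmodType) (B : brace V).
Local Notation m := (bmul B).
Local Notation s := (star B).
Local Notation iv := (binv B).

Lemma grp0 (M : V -> Prop) : grp M -> M 0. Proof. by case. Qed.
Lemma grpD (M : V -> Prop) x y : grp M -> M x -> M y -> M (x + y). Proof. by move=> [_ [H _]]; apply H. Qed.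
Lemma grpN (M : V -> Prop) x : grp M -> M x -> M (- x). Proof. by move=> [_ [_ H]]; apply H. Qed.
Lemma idlG M : idl B M -> grp M. Proof. by case. Qed.
Lemma idlSl M x t : idl B M -> M t -> M (s x t). Proof. by move=> [_ H] Ht; apply (H x t Ht). Qed.
Lemma idlSr M x t : idl B M -> M t -> M (s t x). Proof. by move=> [_ H] Ht; apply (H x t Ht). Qed.

Fixpoint zr (N : V -> Prop) (k : nat) : V -> Prop :=
  match k with
  | 0 => N
  | k'.+1 => fun a => forall x, zr N k' (s a x) /\ zr N k' (s x a)
  end.

Fixpoint csf (b : V) (n : nat) : V -> Prop :=
  match n with
  | 0 => fun x => x = 0
  | n'.+1 => fun x => exists k : int, exists y, csf (s b b) n' y /\ x = b *~ k + y
  end.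

Lemma aseqS b i : aseq B b i.+1 = aseq B (s b b) i.
Proof. by elim: i => [|i IH] //=; rewrite -IH. Qed.

Lemma zr_shift k N a : zr N k.+1 a <-> zr (zr N 1) k a.
Proof.
elim: k a => [|k IH] a; first by [].
split => H x; have [H1 H2] := H x; split; by apply/IH.
Qed.

Lemma zr1_idl N : idl B N -> idl B (zr N 1) /\ (forall x, N x -> zr N 1 x).
Proof.
move=> I.
have NN1 : forall x, N x -> zr N 1 x by move=> x Hx y; split; [apply idlSr|apply idlSl].
split => //; split; first split.
- by move=> x /=; rewrite star0l star0r; split; apply (grp0 (idlG I)).
- split.
    move=> z z' Hz Hz' x; split.
      by apply Lpos => //; [apply (Hz x).1|apply (Hz' x).1|apply (Hz z').1].
    by rewrite starD; apply grpD; [apply idlG|apply (Hz x).2|apply (Hz' x).2].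
  move=> z Hz x; split.
    by apply Lneg => //; [apply (Hz x).1|apply (Hz z).1].
  by rewrite starN; apply grpN; [apply idlG|apply (Hz x).2].
- by move=> x t Ht; split; apply NN1; [apply (Ht x).2|apply (Ht x).1].
Qed.

Lemma zr_idl k N : idl B N -> idl B (zr N k) /\ (forall x, N x -> zr N k x).
Proof.
elim: k N => [|k IH] N I; first by split.
have [I1 S1] := zr1_idl I.
have [IK SK] := IH _ I1.
split.
  by apply: (idl_ext (P := zr (zr N 1) k)) => // x; split => /zr_shift.
by move=> x Hx; apply/zr_shift; apply SK; apply S1.
Qed.

Lemma zr_mono k N x : idl B N -> zr N k x -> zr N k.+1 x.
Proof.
elim: k N x => [|k IH] N x I; first by apply (zr1_idl I).2.
have [I1 _] := zr1_idl I.
move=> /zr_shift H; apply/zr_shift; by apply IH.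
Qed.

Lemma zr_aseq i k N a : zr N (i + k) a -> zr N k (aseq B a i).
Proof.
elim: i a => [|i IH] a //.
rewrite addSn => H; rewrite aseqS; apply IH; exact: (H a).1.
Qed.

Lemma csf_grp n b : grp (csf b n).
Proof.
elim: n b => [|n IH] b.
  split => //; split; first by move=> x y -> ->; rewrite addr0.
  by move=> x ->; rewrite oppr0.
split; first by exists 0, 0; split; [apply (grp0 (IH _))|rewrite mulr0z addr0].
split.
  move=> x y [k [p [Hp ->]]] [k' [p' [Hp' ->]]].
  exists (k + k'), (p + p'); split; first by apply grpD.
  by rewrite mulrzDr addrACA.
move=> x [k [p [Hp ->]]]; exists (- k), (- p); split; first by apply grpN.
by rewrite mulrNz opprD.
Qed.

Lemma csf_mono n b x : csf b n x -> csf b n.+1 x.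
Proof.
elim: n b x => [|n IH] b x.
  by move=> -> /=; exists 0, 0; rewrite mulr0z addr0.
move=> [k [y [Hy ->]]]; exists k, y; split => //; by apply IH.
Qed.

Lemma csf_back n b x :
  csf b n.+1 x -> exists y (k : int), csf b n y /\ x = y + aseq B b n *~ k.
Proof.
elim: n b x => [|n IH] b x.
  by move=> [k [y [/= -> ->]]]; exists 0, k; rewrite addr0 add0r.
move=> [k [y [Hy ->]]].
have [y' [k' [Hy' ->]]] := IH _ _ Hy.
exists (b *~ k + y'), k'; split; first by exists k, y'.
by rewrite addrA aseqS.
Qed.

Lemma csf_in M b n x : idl B M -> M b -> csf b n x -> M x.
Proof.
move=> I; elim: n b x => [|n IH] b x Hb; first by move=> ->; apply (grp0 (idlG I)).
move=> [k [y [Hy ->]]]; apply grpD; first by apply idlG.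
  by apply grpMz => //; apply idlG.
by apply: (IH (s b b)) => //; apply idlSl.
Qed.

Lemma csf_br n b x : csf b n x -> br B b x.
Proof.
elim: n b x => [|n IH] b x.
  by move=> -> S [[S0 _] _] _.
move=> [k [y [Hy ->]]] S SB Sb.
have SB' := SB; move: SB' => [[S0 [SD SN]] [_ [SM _]]].
apply SD; first by apply grpMz => //; split.
apply: (IH _ _ Hy) => //.
rewrite /star; apply SD; first by apply SD; [apply SM|apply SN].
by apply SN.
Qed.

Lemma zr_self N n c : grp N -> zr N n c -> sumset (csf c n) N c.
Proof.
case: n => [|n] G H; first by exists 0, c; rewrite add0r.
exists c, 0; split; last by rewrite addr0; split => //; apply grp0.
exists 1, 0; split; first by apply (grp0 (csf_grp _ _)).
by rewrite addr0.
Qed.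

End Main.

Section Claim.
Variables (V : zmodType) (B : brace V).
Local Notation m := (bmul B).
Local Notation s := (star B).

Lemma claim (TB : T_brace B) n :
  forall N, idl B N -> forall b, zr B N n b -> idl B (sumset (csf B b n) N).
Proof.
elim: n => [|n IH] N IN b hb.
  apply: (idl_ext (P := N)) => // x; split.
    by move=> Hx; exists 0, x; rewrite add0r.
  by move=> [p [q [/= -> [Hq ->]]]]; rewrite add0r.
have [IN1 SN1] := zr1_idl IN.
have hb' : zr B (zr B N 1) n b by apply/zr_shift.
have IJ := IH _ IN1 b hb'.
have hb1 : zr B N n (s b b) by exact: (hb b).1.
have I2 := IH _ IN (s b b) hb1.
set N1 := zr B N 1 in IN1 SN1 hb' IJ.
set J := sumset (csf B b n) N1 in IJ.
set I2s := sumset (csf B (s b b) n) N in I2.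
set I := sumset (csf B b n.+1) N.
have GN := idlG IN.
have G2 := idlG I2.
have Ichar : forall x, I x -> exists k p, I2s p /\ x = b *~ k + p.
  move=> x [p [q [[k [y [Hy ->]]] [Hq ->]]]].
  by exists k, (y + q); split; [exists y, q|rewrite addrA].
have I2I : forall p, I2s p -> I p.
  move=> p [y [q [Hy [Hq ->]]]]; exists (b *~ 0 + y), q; split => //.
  by exists 0, y.
  by rewrite mulr0z add0r.
have NI : forall q, N q -> I q.
  by move=> q Hq; exists 0, q; split; [apply: grp0; apply csf_grp|rewrite add0r].
have GI : grp I by apply: grp_sum => //; apply csf_grp.
have bb : I2s (s b b) by apply: zr_self.
have Icl : forall i t, I i -> I t -> I2s (s i t).
  move=> i t /Ichar [k [p [Hp ->]]] /Ichar [l [q [Hq ->]]].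
  rewrite starD starMz; apply grpD => //; last by apply idlSl.
  apply grpMz => //.
  rewrite -(subrK (s (b *~ k) b) (s (b *~ k + p) b)).
  apply grpD => //; first by apply Lmod.
  by apply LkB.
have IJsub : forall x, I x -> J x.
  move=> x [p [q [Hp [Hq ->]]]].
  have [y [k [Hy ->]]] := csf_back Hp.
  exists y, (aseq B b n *~ k + q); split => //; split; last by rewrite addrA.
  apply: (@grpD _ N1); first exact: idlG IN1.
    apply: (@grpMz _ N1); first exact: idlG IN1.
    by apply: (@zr_aseq _ B n 1 N b); rewrite addn1.
  by apply SN1.
have IdJ := idl_ideal IJ.
apply: ideal_idl; apply: (TB _ _ IdJ); apply: mk_ideal_of => //.
  by case: IdJ.
move=> j t [y [z [Hy [Hz ->]]]] It.
have Iy : I y by exists y, 0; split; [apply csf_mono|split; [apply grp0|rewrite addr0]].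
split.
  rewrite -(subrK (s y t) (s (y + z) t)); apply grpD => //; last by apply I2I; apply Icl.
  apply NI; apply: (Lmod2 B N1 N) => //.
  - by move=> x w Hw; apply: idlSl IN1 Hw.
  - by move=> x w Hx Hw; apply: grpD (idlG IN1) Hx Hw.
  - by move=> w x Hw; exact: (Hw x).1.
  - by move=> x w Hw; apply: idlSl IN Hw.
  - by move=> x w; apply grpD.
rewrite starD; apply grpD => //; first by apply I2I; apply Icl.
by apply NI; exact: (Hz t).2.
Qed.

End Claim.

Section Final.
Variables (V : zmodType) (B : brace V).
Local Notation m := (bmul B).
Local Notation s := (star B).
Local Notation N0 := (fun x : V => x = 0).

Lemma cyc_csf n b x : cyc_sum B b n x <-> csf B b n x.
Proof.
elim: n b x => [|n IH] b x.
  split; first by move=> [k ->]; rewrite big_ord0.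
  by move=> /= ->; exists (fun _ => 0); rewrite big_ord0.
split.
  move=> [k ->]; rewrite big_ord_recl.
  exists (k ord0), (\sum_(i < n) aseq B b (lift ord0 i) *~ k (lift ord0 i)); split => //.
  apply/IH; exists (fun i => k (lift ord0 i)).
  by apply: eq_bigr => i _; rewrite -aseqS.
move=> [k0 [y [/IH [k' ->] ->]]].
exists (fun i : 'I_n.+1 => if unlift ord0 i is Some j then k' j else k0).
rewrite big_ord_recl unlift_none /=; congr (_ + _).
by apply: eq_bigr => i _; rewrite liftK -aseqS.
Qed.

Lemma zeta_zr k a : zeta_star B k a <-> zr B N0 k a.
Proof.
elim: k a => [|k IH] a; first by [].
by split => H x; have [H1 H2] := H x; split; apply/IH.
Qed.

Lemma idlN0 : idl B N0.
Proof.
split; first split => //.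
  by split; [move=> x y -> ->; rewrite addr0|move=> x ->; rewrite oppr0].
by move=> x t ->; rewrite star0r star0l.
Qed.

Lemma part1 (TB : T_brace B) n a : zeta_star B n a ->
  idl B (br B a) /\ (forall x, br B a x <-> cyc_sum B a n x).
Proof.
move=> /zeta_zr hz.
have IC := @claim _ B TB n _ idlN0 a hz.
have Ca : sumset (csf B a n) N0 a by apply: zr_self => //; apply: idlG idlN0.
have E : forall x, br B a x <-> cyc_sum B a n x.
  move=> x; split.
    move=> Hx; have [p [q [Hp [-> ->]]]] : sumset (csf B a n) N0 x.
      apply: Hx => //; by case: (idl_ideal IC).
    by rewrite addr0; apply/cyc_csf.
  by move/cyc_csf; exact: csf_br.
split => //.
apply: (idl_ext (P := sumset (csf B a n) N0)) => // x.
split.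
  by move=> [p [q [Hp [-> ->]]]]; rewrite addr0; apply/E/cyc_csf.
by move=> /E /cyc_csf Hx; exists x, 0; rewrite addr0.
Qed.

End Final.

Section Part2.
Variables (V : zmodType) (B : brace V).
Local Notation m := (bmul B).
Local Notation s := (star B).
Local Notation N0 := (fun x : V => x = 0).
Local Notation Z := (zr B N0).

Lemma zmod1 (X A U W : V) : X - U - W = X - (A + U + W) + A.
Proof. by rewrite !opprD !addrA [RHS]addrAC [X - A - U + A]addrAC subrK. Qed.

Lemma zmod2 (S P U Q : V) : S - (Q + U) = (S - P - U) + (P - Q).
Proof. by rewrite addrAC subrKA opprD addrA. Qed.

Lemma ZI j : idl B (Z j). Proof. exact: (zr_idl j (idlN0 B)).1. Qed.

Lemma Ladd j u v x : Z j.+2 u -> Z j.+2 v -> Z j (s (u + v) x - s u x - s v x).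
Proof.
move=> hu hv.
have I1 := ZI j.+1; have I0 := ZI j.
rewrite (@addE _ B u v).
set w := m u v; set p := - s u v.
have Hp : Z j.+1 p by apply: (grpN _ (idlG I1)); exact: (hu v).1.
have H1 : Z j (s (w + p) x - s w x).
  apply: (Lmod2 B (Z j.+1) (Z j)) => //.
  - by move=> y t Ht; exact: (idlSl _ _ I1 Ht).
  - by move=> y t Hy Ht; exact: (grpD _ _ (idlG I1) Hy Ht).
  - by move=> t y Ht; exact: (Ht y).1.
  - by move=> y t Ht; exact: (idlSl _ _ I0 Ht).
  - by move=> y t Hy Ht; exact: (grpD _ _ (idlG I0) Hy Ht).
have H2 : Z j (s u (s v x)) := ((hv x).1 u).2.
rewrite (zmod1 _ (s u (s v x))) -[s u (s v x) + _ + _]starF2.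
exact: (grpD _ _ (idlG I0) H1 H2).
Qed.

Lemma Lmul j u x k : Z j.+2 u -> Z j (s (u *+ k) x - (s u x) *+ k).
Proof.
move=> hu; have I0 := ZI j; have I2 := ZI j.+2.
elim: k => [|k IH]; first by rewrite !mulr0n star0l subrr; exact: (grp0 (idlG I0)).
rewrite mulrSr mulrSr (zmod2 _ (s (u *+ k) x)).
apply: (grpD _ _ (idlG I0)) IH.
by apply: Ladd => //; exact: (grpMn _ _ (idlG I2) hu).
Qed.

Definition TFhyp := forall z, star_center B z -> forall m : nat, (0 < m)%N -> z *+ m = 0 -> z = 0.

Lemma TF (H : TFhyp) j u k : (0 < k)%N -> Z j.+1 u -> Z j (u *+ k) -> Z j u.
Proof.
elim: j u => [|j IH] u Hk hu hm; first exact: (H u hu k Hk hm).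
move=> x; split.
  apply: (IH _ Hk); first exact: (hu x).1.
  have := grpB _ _ (idlG (ZI j)) ((hm x).1) (Lmul x k hu).
  by rewrite opprB addrCA subrr addr0.
apply: (IH _ Hk); first exact: (hu x).2.
by rewrite -starMn; exact: (hm x).2.
Qed.

Lemma Key (H : TFhyp) n a k : (0 < k)%N -> Z n.+1 a -> csf B (s a a) n (a *+ k) -> a *+ k = 0.
Proof.
elim: n a => [|n IH] a Hk ha Hc; first by [].
have a1 : Z n.+1 (s a a) by exact: (ha a).1.
have hm : Z n.+1 (a *+ k) := csf_in _ _ _ (ZI n.+1) a1 Hc.
have ha' : Z n.+1 a by apply: TF H n.+1 a k Hk ha hm.
have c0 : aseq B (s a a) n = 0.
  by apply: (@zr_aseq _ B n 0 N0 (s a a)); rewrite addn0; exact: (ha' a).1.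
have [y [c [Hy E]]] := csf_back Hc.
rewrite c0 mul0rz addr0 in E.
by apply: IH Hk ha' _; rewrite E.
Qed.

Lemma direct (H : TFhyp) n a : Z n a -> cyc_sum_direct B a n.
Proof.
elim: n a => [|n IH] a ha.
  by move=> k _ [].
move=> k Hk.
rewrite big_ord_recl in Hk.
set t := \sum_(i < n) _ in Hk.
have Ht : csf B (s a a) n t.
  apply/cyc_csf; exists (fun i => k (lift ord0 i)).
  by rewrite /t; apply: eq_bigr => i _; rewrite -aseqS.
have Gc := csf_grp B n (s a a).
have Hneg : csf B (s a a) n (a *~ k ord0).
  have -> : a *~ k ord0 = - t by apply/eqP; rewrite -addr_eq0 Hk.
  exact: (grpN _ Gc Ht).
have H0 : a *~ k ord0 = 0.
  move: Hneg; case: (k ord0) => [[|k0]|k0] Hc; first by rewrite mulr0z.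
    by rewrite -pmulrn in Hc *; exact: (Key H k0.+1 (ltn0Sn k0) ha Hc).
  rewrite NegzE mulrNz -pmulrn in Hc *.
  have Hc' : csf B (s a a) n (a *+ k0.+1).
    by rewrite -[a *+ _]opprK; exact: (grpN _ Gc Hc).
  by rewrite (Key H k0.+1 (ltn0Sn k0) ha Hc') oppr0.
have Ht0 : t = 0 by move: Hk; rewrite H0 add0r.
have IHa := IH (s a a) ((ha a).1) (fun i => k (lift ord0 i)).
have IHa' : forall j : 'I_n, aseq B (s a a) j *~ k (lift ord0 j) = 0.
  apply: IHa; rewrite -[RHS]Ht0 /t; apply: eq_bigr => i _; by rewrite -aseqS.
move=> i; case: (unliftP ord0 i) => [j ->|->]; last exact: H0.
have := IHa' j; by rewrite -aseqS.
Qed.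

End Part2.

Theorem lemma3p5 (V : zmodType) (B : brace V) (n : nat) (a : V) :
  T_brace B -> zeta_star B n a ->
  (ideal B (br B a) /\ (forall x, br B a x <-> cyc_sum B a n x)) /\
  ((forall z, star_center B z -> forall m : nat, (0 < m)%N -> z *+ m = 0 -> z = 0) ->
     (forall x, br B a x <-> cyc_sum B a n x) /\ cyc_sum_direct B a n).
Proof.
move=> TB hz; have [I E] := part1 TB n a hz.
split; first by split => //; apply: idl_ideal.
move=> TFH; split => //.
by apply: (direct TFH); apply/zeta_zr.
Qed.
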